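(* Let $\sigma>0$, $\gamma''=\gamma(1+\sigma)$, an integer $\tau\ge1$ and $D\ge0$ be given. For every $(s,a)$ define $W_{\tau;\tau}(s,a)=0$, $Y_{\tau;\tau}(s,a)=D$, and for $t\ge\tau$: if $t\notin T^A$ then $W_{t+1;\tau}=W_{t;\tau}$ and $Y_{t+1;\tau}=Y_{t;\tau}$; if $t\in T^A$ then $W_{t+1;\tau}(s,a)=(1-\alpha_t)W_{t;\tau}(s,a)+\alpha_tw_t(s,a)$ and $Y_{t+1;\tau}(s,a)=(1-\alpha_t)Y_{t;\tau}(s,a)+\alpha_t\gamma''D$. Then on every realization for which $\|r_t\|\le D$ and $\|u^{BA}_t\|\le\sigma D$ for all $t\ge\tau$, we have for all $t\ge\tau$ and all $(s,a)$: $$-Y_{t;\tau}(s,a)+W_{t;\tau}(s,a)\le r_t(s,a)\le Y_{t;\tau}(s,a)+W_{t;\tau}(s,a).$$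
   Context: Finite MDP with discount $\gamma\in(0,1)$, rewards $R_t(s,a,s')$ with mean $R_{sa}^{s'}$; $\|Q\|=\max_{s,a}|Q(s,a)|$; $\mathcal T Q(s,a)=\mathbb E_{s'\sim P(\cdot|s,a)}[R_{sa}^{s'}+\gamma\max_{a'}Q(s',a')]$ with unique fixed point $Q^*$. Synchronous double Q-learning with learning rates $\alpha_t\in(0,1]$: at each iteration $t$ an independent fair coin selects UPDATE(A) or UPDATE(B); for every $(s,a)$ a next state $s'\sim P(\cdot|s,a)$ and a reward $R_t(s,a,s')$ are sampled. Under UPDATE(A): $a^*=\arg\max_{a'}Q^A_t(s',a')$, $Q^A_{t+1}(s,a)=Q^A_t(s,a)+\alpha_t(R_t(s,a,s')+\gamma Q^B_t(s',a^* )-Q^A_t(s,a))$, $Q^B_{t+1}=Q^B_t$. Under UPDATE(B): $b^*=\arg\max_{b'}Q^B_t(s',b')$, $Q^B_{t+1}(s,a)=Q^B_t(s,a)+\alpha_t(R_t(s,a,s')+\gamma Q^A_t(s',b^* )-Q^B_t(s,a))$, $Q^A_{t+1}=Q^A_t$. $T^A$ is the (random) set of iterations at which UPDATE(A) is chosen. $r_t:=Q^A_t-Q^*$, $u^{BA}_t:=Q^B_t-Q^A_t$, and for $t\in T^A$, $w_t(s,a):=R_t(s,a,s')+\gamma Q^A_t(s',a^* )-(\mathcal TQ^A_t)(s,a)$. *)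

(* Defs.v *)
(* Pathwise (realization-by-realization) model of synchronous
   double Q-learning on a finite MDP. *)
From HB Require Import structures.
From mathcomp Require Import all_boot all_order all_algebra.
Set Implicit Arguments. Unset Strict Implicit. Unset Printing Implicit Defensive.
Import Order.TTheory GRing.Theory Num.Theory.
Local Open Scope ring_scope.

Section DQ.
Variables (R : realFieldType) (S A : finType) (a0 : A).

Definition qfun := S -> A -> R.

Definition amax (Q : qfun) (s : S) : A := [arg max_(b > a0) Q s b]%O.

Definition supnorm (Q : qfun) : R :=
  \big[Num.max/0]_(p : S * A) `|Q p.1 p.2|.

Definition qsub (Q1 Q2 : qfun) : qfun := fun s a => Q1 s a - Q2 s a.

Definition bellman (gamma : R) (P : S -> A -> S -> R) (Rbar : S -> A -> S -> R)
  (Q : qfun) : qfun :=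
  fun s a => \sum_(s' : S) P s a s' * (Rbar s a s' + gamma * Q s' (amax Q s')).

Variables (gamma : R) (alpha : nat -> R).
(* a realization: coin t = true iff UPDATE(A) is chosen at iteration t
   (i.e. t \in T^A); nxt t s a = sampled next state s' for (s,a) at time t;
   rew t s a s' = the realized reward R_t(s,a,s'). *)
Variables (coin : nat -> bool) (nxt : nat -> S -> A -> S)
          (rew : nat -> S -> A -> S -> R) (QA0 QB0 : qfun).

Fixpoint dq (t : nat) : qfun * qfun :=
  match t with
  | 0 => (QA0, QB0)
  | t'.+1 =>
    let: (qa, qb) := dq t' in
    if coin t' then
      ((fun s a => let s' := nxt t' s a in
         qa s a + alpha t' * (rew t' s a s' + gamma * qb s' (amax qa s') - qa s a)),
       qb)
    else
      (qa,
       (fun s a => let s' := nxt t' s a in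
         qb s a + alpha t' * (rew t' s a s' + gamma * qa s' (amax qb s') - qb s a)))
  end.

Definition QA (t : nat) : qfun := (dq t).1.
Definition QB (t : nat) : qfun := (dq t).2.

Variables (P : S -> A -> S -> R) (Rbar : S -> A -> S -> R).

Definition wnoise (t : nat) : qfun :=
  fun s a => let s' := nxt t s a in
    rew t s a s' + gamma * QA t s' (amax (QA t) s') - bellman gamma P Rbar (QA t) s a.

Fixpoint Wseq (tau t : nat) : qfun :=
  match t with
  | 0 => fun _ _ => 0
  | t'.+1 =>
    if (t'.+1 <= tau)%N then fun _ _ => 0
    else if coin t' then
      fun s a => (1 - alpha t') * Wseq tau t' s a + alpha t' * wnoise t' s a
    else Wseq tau t'
  end.

Fixpoint Yseq (gamma2 D : R) (tau t : nat) : qfun :=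
  match t with
  | 0 => fun _ _ => D
  | t'.+1 =>
    if (t'.+1 <= tau)%N then fun _ _ => D
    else if coin t' then
      fun s a => (1 - alpha t') * Yseq gamma2 D tau t' s a + alpha t' * (gamma2 * D)
    else Yseq gamma2 D tau t'
  end.

End DQ.

(* Main.v *)
Require Import Defs.
From HB Require Import structures.
From mathcomp Require Import all_boot all_order all_algebra.
From mathcomp Require Import ring lra.
Import Order.TTheory GRing.Theory Num.Theory.
Local Open Scope ring_scope.
Set Implicit Arguments. Unset Strict Implicit.

Lemma amax_ge (R : realFieldType) (S A : finType) (a0 : A) (Q : qfun R S A) s b :
  Q s b <= Q s (amax a0 Q s).
Proof. rewrite /amax; case: arg_maxP => // i _ H; exact: H. Qed.

Lemma supnorm_ge (R : realFieldType) (S A : finType) (Q : qfun R S A) s a :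
  `|Q s a| <= supnorm Q.
Proof.
rewrite /supnorm (bigD1 (s, a)) //= le_max lexx //.
Qed.

Lemma QA_S (R : realFieldType) (S A : finType) (a0 : A) gamma alpha coin nxt rew
  (QA0 QB0 : qfun R S A) t :
  QA a0 gamma alpha coin nxt rew QA0 QB0 t.+1 =
  if coin t then
    (fun s a => let s' := nxt t s a in
      QA a0 gamma alpha coin nxt rew QA0 QB0 t s a + alpha t *
       (rew t s a s' + gamma * QB a0 gamma alpha coin nxt rew QA0 QB0 t s'
          (amax a0 (QA a0 gamma alpha coin nxt rew QA0 QB0 t) s')
        - QA a0 gamma alpha coin nxt rew QA0 QB0 t s a))
  else QA a0 gamma alpha coin nxt rew QA0 QB0 t.
Proof.
rewrite /QA /QB /=; case: (dq _ _ _ _ _ _ _ _ t) => qa qb /=; by case: coin.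
Qed.

Unset Implicit Arguments. Set Strict Implicit.

Theorem lemma12
  (R : realFieldType) (S A : finType) (a0 : A)
  (gamma : R) (P : S -> A -> S -> R) (Rbar : S -> A -> S -> R) (Qstar : qfun R S A)
  (alpha : nat -> R)
  (coin : nat -> bool) (nxt : nat -> S -> A -> S) (rew : nat -> S -> A -> S -> R)
  (QA0 QB0 : qfun R S A)
  (sigma D : R) (tau : nat) :
  0 < gamma < 1 ->
  (forall s a s', 0 <= P s a s') ->
  (forall s a, \sum_(s' : S) P s a s' = 1) ->
  (forall s a, bellman a0 gamma P Rbar Qstar s a = Qstar s a) ->
  (forall t, 0 < alpha t <= 1) ->
  0 < sigma -> (1 <= tau)%N -> 0 <= D ->
  (forall t, (tau <= t)%N ->
     supnorm (qsub (QA a0 gamma alpha coin nxt rew QA0 QB0 t) Qstar) <= D /\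
     supnorm (qsub (QB a0 gamma alpha coin nxt rew QA0 QB0 t)
                   (QA a0 gamma alpha coin nxt rew QA0 QB0 t)) <= sigma * D) ->
  forall t, (tau <= t)%N -> forall s a,
    let r := qsub (QA a0 gamma alpha coin nxt rew QA0 QB0 t) Qstar in
    let W := Wseq a0 gamma alpha coin nxt rew QA0 QB0 P Rbar tau t in
    let Y := Yseq alpha coin (gamma * (1 + sigma)) D tau t in
    - Y s a + W s a <= r s a <= Y s a + W s a.
Proof.
move=> /andP[g0 g1] P0 P1 Hbell Hal sig0 tau1 D0 Hb.
elim=> [|t IH] ht s a /=.
  by move: (leq_trans tau1 ht).
have [et|net] := eqVneq tau t.+1.
  rewrite et leqnn /qsub.
  have := supnorm_ge (qsub (QA a0 gamma alpha coin nxt rew QA0 QB0 t.+1) Qstar) s a.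
  have [H _] := Hb _ ht.
  move=> H1; have := le_trans H1 H; rewrite /qsub ler_norml => /andP[h1 h2].
  by apply/andP; split; lra.
have ht' : (tau <= t)%N by rewrite leq_eqVlt (negbTE net) /= in ht.
have -> : (t.+1 <= tau)%N = false by apply/negbTE; rewrite -ltnNge.
have IHs := IH ht' s a; rewrite /= /qsub in IHs.
rewrite QA_S.
case Hc: (coin t); last by rewrite /qsub.
rewrite /qsub /=.
set qa := QA a0 gamma alpha coin nxt rew QA0 QB0 t.
set qb := QB a0 gamma alpha coin nxt rew QA0 QB0 t.
set s' := nxt t s a.
set W := Wseq a0 gamma alpha coin nxt rew QA0 QB0 P Rbar tau t in IHs *.
set Y := Yseq alpha coin (gamma * (1 + sigma)) D tau t in IHs *.
rewrite -/qa in IHs.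
have [HA HB] := Hb _ ht'.
have HBs : `|qb s' (amax a0 qa s') - qa s' (amax a0 qa s')| <= sigma * D.
  apply: le_trans HB; exact: (supnorm_ge (qsub qb qa)).
have Hmax : forall s2, `|qa s2 (amax a0 qa s2) - Qstar s2 (amax a0 Qstar s2)| <= D.
  move=> s2; rewrite ler_norml; apply/andP; split.
  - have h := amax_ge a0 qa s2 (amax a0 Qstar s2).
    have h2 := le_trans (supnorm_ge (qsub qa Qstar) s2 (amax a0 Qstar s2)) HA.
    rewrite /qsub ler_norml in h2; case/andP: h2 => h2 _; lra.
  - have h := amax_ge a0 Qstar s2 (amax a0 qa s2).
    have h2 := le_trans (supnorm_ge (qsub qa Qstar) s2 (amax a0 qa s2)) HA.
    rewrite /qsub ler_norml in h2; case/andP: h2 => _ h2; lra.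
have HT : `|bellman a0 gamma P Rbar qa s a - Qstar s a| <= gamma * D.
  rewrite -Hbell /bellman -sumrB.
  have -> : gamma * D = \sum_(s2 : S) P s a s2 * (gamma * D).
    by rewrite -mulr_suml P1 mul1r.
  apply: le_trans (ler_norm_sum _ _ _) _; apply: ler_sum => s2 _.
  rewrite -mulrBr normrM ger0_norm // ler_wpM2l //.
  have -> : Rbar s a s2 + gamma * qa s2 (amax a0 qa s2) -
     (Rbar s a s2 + gamma * Qstar s2 (amax a0 Qstar s2)) =
     gamma * (qa s2 (amax a0 qa s2) - Qstar s2 (amax a0 Qstar s2)) by ring.
  by rewrite normrM gtr0_norm // ler_wpM2l // ltW.
rewrite /wnoise -/qa -/s'.
set T := bellman a0 gamma P Rbar qa s a in HT *.
set e1 := qb s' (amax a0 qa s') - qa s' (amax a0 qa s') in HBs.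
move: HBs HT; rewrite !ler_norml => /andP[b1 b2] /andP[c1 c2].
have [al0 al1] := andP (Hal t).
have k1 : 0 <= 1 - alpha t by lra.
case/andP: IHs => i1 i2.
have m1 := mulr_ge0 k1 ((etrans (subr_ge0 (-Y s a + W s a) (qa s a - Qstar s a)) i1)).
have m2 := mulr_ge0 k1 ((etrans (subr_ge0 (qa s a - Qstar s a) (Y s a + W s a)) i2)).
have gs : 0 <= gamma * sigma * D by rewrite mulr_ge0 // mulr_ge0 // ltW.
have n1 : - (gamma * (1 + sigma) * D) <= (T - Qstar s a) + gamma * e1.
  have : gamma * (- (sigma * D)) <= gamma * e1 by rewrite ler_wpM2l // ltW.
  lra.
have n2 : (T - Qstar s a) + gamma * e1 <= gamma * (1 + sigma) * D.
  have : gamma * e1 <= gamma * (sigma * D) by rewrite ler_wpM2l // ltW.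
  lra.
have m3 := mulr_ge0 (ltW al0) ((etrans (subr_ge0 _ _) n1)).
have m4 := mulr_ge0 (ltW al0) ((etrans (subr_ge0 _ _) n2)).
rewrite /e1 in m3 m4.
apply/andP; split; nra.
Qed.
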